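(* Let $A$, $\kappa$, $I_0=\{i_1<\dots<i_N\}$, $\tilde\phi$ be as in the context. Let $1\le n\le N$, let $k_1,\dots,k_n\in\{1,\dots,N\}$ be distinct rows and $j_1,\dots,j_n\in[M]\setminus I_0$ distinct non-pivot columns with $a_{k_r,j_r}\ne0$ for all $r$. Let $J=(I_0\setminus\{i_{k_1},\dots,i_{k_n}\})\cup\{j_1,\dots,j_n\}$. Then $$\Big|\prod_{r=1}^n a_{k_r,j_r}\Big|\frac{E_J}{E_{I_0}}=\Big|\prod_{1\le r<r'\le n}C_{r,r'}\Big|\exp\Big(\sum_{r=1}^n\tilde\phi_{(k_r,j_r)}\Big),\qquad C_{r,r'}=\frac{(\kappa_{i_{k_r}}-\kappa_{i_{k_{r'}}})(\kappa_{j_r}-\kappa_{j_{r'}})}{(\kappa_{i_{k_r}}-\kappa_{j_{r'}})(\kappa_{j_r}-\kappa_{i_{k_{r'}}})}.$$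
   Context: $\kappa_1<\dots<\kappa_M$ are real; $\xi_j=\kappa_jx+\kappa_j^2y+\kappa_j^3t$; for $I=\{i_1<\dots<i_N\}$, $E_I=\prod_{a<b}(\kappa_{i_b}-\kappa_{i_a})\exp(\sum_a\xi_{i_a})$ (indices listed increasingly). $A=(a_{k,j})$ is a real $N\times M$ rank-$N$ matrix in reduced row echelon form with pivot columns $I_0=\{i_1<\dots<i_N\}$ (pivot of row $k$ in column $i_k$). For each row $k$ and each non-pivot column $j$ with $a_{k,j}\ne0$, define $\phi_{(k,j)}=\xi_j-\xi_{i_k}$, $e^{\phi^0_{(k,j)}}=|a_{k,j}|\prod_{m\ne k}|\kappa_{i_m}-\kappa_j|/\prod_{m\ne k}|\kappa_{i_m}-\kappa_{i_k}|$, and $\tilde\phi_{(k,j)}=\phi_{(k,j)}+\phi^0_{(k,j)}$. *)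

(* Defs.v *)
From HB Require Import structures.
From mathcomp Require Import all_boot all_order all_algebra.
From mathcomp Require Import all_classical all_reals all_analysis.
Set Implicit Arguments. Unset Strict Implicit. Unset Printing Implicit Defensive.
Import Order.TTheory GRing.Theory Num.Theory.
Local Open Scope ring_scope.

Section KP.
Variables (R : realType) (M : nat).

Definition xi (kappa : 'I_M -> R) (x y t : R) (j : 'I_M) : R :=
  kappa j * x + kappa j ^+ 2 * y + kappa j ^+ 3 * t.

(* E_I = prod_{a<b} (kappa_{i_b} - kappa_{i_a}) exp(sum_a xi_{i_a}),
   indices of I listed increasingly (columns are ordered as 'I_M). *)
Definition E_set (kappa : 'I_M -> R) (x y t : R) (I : {set 'I_M}) : R :=
  (\prod_(a in I) \prod_(b in I | (a < b)%N) (kappa b - kappa a))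
  * expR (\sum_(a in I) xi kappa x y t a).

Variable N : nat.

Definition rref_pivots (A : 'M[R]_(N, M)) (p : 'I_N -> 'I_M) : Prop :=
  [/\ forall k k' : 'I_N, (k < k')%N -> (p k < p k')%N,
      forall k : 'I_N, A k (p k) = 1,
      forall k k' : 'I_N, k' != k -> A k' (p k) = 0
    & forall (k : 'I_N) (j : 'I_M), (j < p k)%N -> A k j = 0].

Definition pivot_set (p : 'I_N -> 'I_M) : {set 'I_M} := p @: [set: 'I_N].

Definition phi (kappa : 'I_M -> R) (x y t : R) (p : 'I_N -> 'I_M)
  (k : 'I_N) (j : 'I_M) : R := xi kappa x y t j - xi kappa x y t (p k).

Definition exp_phi0 (kappa : 'I_M -> R) (A : 'M[R]_(N, M)) (p : 'I_N -> 'I_M)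
  (k : 'I_N) (j : 'I_M) : R :=
  `|A k j| * (\prod_(m : 'I_N | m != k) `|kappa (p m) - kappa j|)
  / (\prod_(m : 'I_N | m != k) `|kappa (p m) - kappa (p k)|).

Definition tphi (kappa : 'I_M -> R) (x y t : R) (A : 'M[R]_(N, M))
  (p : 'I_N -> 'I_M) (k : 'I_N) (j : 'I_M) : R :=
  phi kappa x y t p k j + ln (exp_phi0 kappa A p k j).

End KP.

(* Main.v *)
Require Import Defs.
From HB Require Import structures.
From mathcomp Require Import all_boot all_order all_algebra.
From mathcomp Require Import all_classical all_reals all_analysis.
From mathcomp Require Import ring.
Import Order.TTheory GRing.Theory Num.Theory.
Local Open Scope ring_scope.

Lemma sq_pairs (R : comRingType) (K : nat) (G : 'I_K -> 'I_K -> R) (P : pred 'I_K) :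
  (forall a b, G a b = G b a) ->
  (\prod_(a | P a) \prod_(b | P b && (a < b)%N) G a b) ^+ 2
  = \prod_(a | P a) \prod_(b | P b && (b != a)) G a b.
Proof.
move=> GS; rewrite expr2.
transitivity (\prod_(a | P a) ((\prod_(b | P b && (a < b)%N) G a b)
                             * \prod_(b | P b && (b < a)%N) G a b)); last first.
  apply: eq_bigr => a _; rewrite [RHS](bigID (fun b : 'I_K => (a < b)%N)) /=.
  congr (_ * _); apply: eq_bigl => b; rewrite -(inj_eq val_inj) /=;
  by case: (ltngtP a b) => h; rewrite ?andbT ?andbF //= ?h ?andbT ?andbF.
rewrite big_split /=; congr (_ * _).
rewrite (exchange_big_dep P) /=; last by move=> a b _ /andP[].
apply: eq_bigr => b Pb; apply: eq_big => a; first by rewrite Pb.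
by move=> _; rewrite GS.
Qed.

Lemma pair_swap (R : comRingType) (T : finType) (H : T -> T -> R) (P : pred T) :
  \prod_(r | P r) \prod_(r' | P r' && (r' != r)) H r r'
  = \prod_(r | P r) \prod_(r' | P r' && (r' != r)) H r' r.
Proof.
rewrite (exchange_big_dep P) /=; last by move=> a b _ /andP[].
apply: eq_bigr => b Pb; apply: eq_bigl => a; by rewrite Pb eq_sym.
Qed.

Lemma pair_swapT (R : comRingType) (T : finType) (H : T -> T -> R) :
  \prod_r \prod_(r' | r' != r) H r r' = \prod_r \prod_(r' | r' != r) H r' r.
Proof.
rewrite (exchange_big_dep predT) //=.
apply: eq_bigr => b _; apply: eq_bigl => a; by rewrite eq_sym.
Qed.

Lemma big_setU_disj (R : comRingType) (T : finType) (S X : {set T}) (P : pred T) (F : T -> R) :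
  [disjoint S & X] ->
  \prod_(a in S :|: X | P a) F a = \prod_(a in S | P a) F a * \prod_(a in X | P a) F a.
Proof.
move=> dSX; rewrite (bigID (mem S)) /=; congr (_ * _); apply: eq_bigl => a;
  rewrite !inE.
  by case: (a \in S); rewrite ?andbT ?andbF.
case aS: (a \in S); rewrite /= ?andbF ?andbT ?orbF //=.
  by rewrite (disjointFr dSX aS).
Qed.

Lemma big_setU_disj0 (R : comRingType) (T : finType) (S X : {set T}) (F : T -> R) :
  [disjoint S & X] ->
  \prod_(a in S :|: X) F a = \prod_(a in S) F a * \prod_(a in X) F a.
Proof.
move=> dSX; rewrite (bigID (mem S)) /=; congr (_ * _); apply: eq_bigl => a;
  rewrite !inE.
  by case: (a \in S); rewrite ?andbT ?andbF.
case aS: (a \in S); rewrite /= ?andbF ?andbT ?orbF //=.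
  by rewrite (disjointFr dSX aS).
Qed.

Lemma big_img_neq (R : comRingType) (T U : finType) (g : T -> U) (A : {pred T}) (x0 : T) (F : U -> R) :
  injective g ->
  \prod_(b in g @: A | b != g x0) F b = \prod_(x in A | x != x0) F (g x).
Proof.
move=> gi; rewrite big_mkcondr big_imset /=; last by move=> x y _ _; apply: gi.
rewrite [RHS]big_mkcondr; apply: eq_bigr => x _; by rewrite (inj_eq gi).
Qed.

Lemma sq_pairsT (R : comRingType) (K : nat) (G : 'I_K -> 'I_K -> R) :
  (forall a b, G a b = G b a) ->
  (\prod_(a : 'I_K) \prod_(b : 'I_K | (a < b)%N) G a b) ^+ 2
  = \prod_(a : 'I_K) \prod_(b : 'I_K | b != a) G a b.
Proof. move=> GS; have H := sq_pairs _ _ G predT GS; simpl in H; exact: H. Qed.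

Lemma prod2_div4 (F : fieldType) (T : finType) (a b c d : T -> T -> F) :
  \prod_r \prod_(r' | r' != r) (a r r' * b r r' / (c r r' * d r r'))
  = (\prod_r \prod_(r' | r' != r) a r r') * (\prod_r \prod_(r' | r' != r) b r r')
    / ((\prod_r \prod_(r' | r' != r) c r r') * (\prod_r \prod_(r' | r' != r) d r r')).
Proof.
under eq_bigr => r _ do rewrite prodf_div !big_split.
by rewrite prodf_div !big_split.
Qed.

Definition Dp {R : comRingType} {T : finType} (G : T -> T -> R) (X : {set T}) :=
  \prod_(a in X) \prod_(b in X | b != a) G a b.

Lemma D_union (R : comRingType) (T : finType) (G : T -> T -> R) (S X : {set T}) :
  (forall a b, G a b = G b a) -> [disjoint S & X] ->
  Dp G (S :|: X) = Dp G S * Dp G X * (\prod_(a in S) \prod_(b in X) G a b) ^+ 2.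
Proof.
move=> GS dSX; rewrite /Dp.
rewrite (eq_bigr (fun a => \prod_(b in S | b != a) G a b * \prod_(b in X | b != a) G a b));
  last by move=> a _; rewrite big_setU_disj.
rewrite big_setU_disj0 //.
rewrite [X in X * _]big_split [X in _ * X]big_split /=.
have e1 : \prod_(a in S) \prod_(b in X | b != a) G a b = \prod_(a in S) \prod_(b in X) G a b.
  apply: eq_bigr => a aS; apply: eq_bigl => b.
  case bX: (b \in X) => //=; apply/eqP => eba; by rewrite eba (disjointFr dSX aS) in bX.
have e2 : \prod_(a in X) \prod_(b in S | b != a) G a b = \prod_(a in S) \prod_(b in X) G a b.
  rewrite (eq_bigr (fun a => \prod_(b in S) G a b)); last first.
    move=> a aX; apply: eq_bigl => b.
    case bS: (b \in S) => //=; apply/eqP => eba; by rewrite -eba (disjointFr dSX bS) in aX.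
  rewrite exchange_big /=; apply: eq_bigr => a aS; apply: eq_bigr => b _; by rewrite GS.
have e3 : forall (Y : {set T}) H, \prod_(a in Y | true) H a = \prod_(a in Y) H a :> R.
  by move=> Y H; apply: eq_bigl => a; rewrite andbT.
rewrite e1 e2; ring.
Qed.

Lemma D_img (R : comRingType) (T U : finType) (G : U -> U -> R) (g : T -> U) :
  injective g ->
  Dp G [set g r | r : T] = \prod_r \prod_(r' | r' != r) G (g r) (g r').
Proof.
move=> gi; rewrite /Dp big_imset /=; last by move=> x y _ _; apply: gi.
apply: eq_bigr => r _; rewrite big_img_neq //.
Qed.


Theorem mainTheorem6 (R : realType) (M N : nat) (kappa : 'I_M -> R)
  (x y t : R) (A : 'M[R]_(N, M)) (p : 'I_N -> 'I_M) (n : nat)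
  (k : 'I_n -> 'I_N) (j : 'I_n -> 'I_M) :
  (forall a b : 'I_M, (a < b)%N -> kappa a < kappa b) ->
  rref_pivots A p ->
  (1 <= n)%N -> (n <= N)%N ->
  injective k -> injective j ->
  (forall r : 'I_n, j r \notin pivot_set p) ->
  (forall r : 'I_n, A (k r) (j r) != 0) ->
  let I0 := pivot_set p in
  let J := (I0 :\: [set p (k r) | r : 'I_n]) :|: [set j r | r : 'I_n] in
  let C (r r' : 'I_n) :=
    ((kappa (p (k r)) - kappa (p (k r'))) * (kappa (j r) - kappa (j r')))
    / ((kappa (p (k r)) - kappa (j r')) * (kappa (j r) - kappa (p (k r')))) in
  `|\prod_(r < n) A (k r) (j r)| * (E_set kappa x y t J / E_set kappa x y t I0)
  = `|\prod_(r < n) \prod_(r' < n | (r < r')%N) C r r'|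
    * expR (\sum_(r < n) tphi kappa x y t A p (k r) (j r)).
Proof.
move=> Hk [Hpinc Hp1 Hp0 Hpl] n1 nN kinj jinj jnp anz I0 J C.
have kapinj : forall a b : 'I_M, a != b -> kappa a != kappa b.
  move=> a b; rewrite -(inj_eq val_inj) /= => ab.
  case: (ltngtP a b) ab => h ab.
  - by rewrite (lt_eqF (Hk _ _ h)).
  - by rewrite (gt_eqF (Hk _ _ h)).
  - by [].
set f := fun a b : 'I_M => `|kappa a - kappa b|.
have fS : forall a b, f a b = f b a by move=> a b; rewrite /f distrC.
have fpos : forall a b, a != b -> 0 < f a b.
  by move=> a b ab; rewrite /f normr_gt0 subr_eq0 kapinj.
have pinj : injective p.
  move=> m m' e; case: (ltngtP m m') => h.
  - by have := Hpinc _ _ h; rewrite e ltnn.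
  - by have := Hpinc _ _ h; rewrite e ltnn.
  - exact: val_inj.
have pkinj : injective (fun r => p (k r)) by move=> r r' /pinj /kinj.
set pK := [set p (k r) | r : 'I_n].
set jS := [set j r | r : 'I_n].
set S := I0 :\: pK.
have pkI0 : forall r, p (k r) \in I0 by move=> r; apply/imsetP; exists (k r); rewrite ?inE.
have pKI0 : forall a, a \in pK -> a \in I0 by move=> a /imsetP[r _ ->].
have dSpK : [disjoint S & pK].
  by rewrite finset.disjoints_subset; apply/fintype.subsetP => a; rewrite !inE => /andP[].
have dSjS : [disjoint S & jS].
  rewrite finset.disjoints_subset; apply/fintype.subsetP => a; rewrite !inE => /andP[_ aI0].
  apply/imsetP => -[r _ ear]; by move: (jnp r); rewrite -ear aI0.
have I0eq : I0 = S :|: pK.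
  apply/setP => a; rewrite !inE; case aK: (a \in pK); rewrite ?orbT ?orbF ?andbT //.
  exact: pKI0.
have pkK : forall r, p (k r) \in pK by move=> r; apply/imsetP; exists r.
have Ypart : forall (F : 'I_M -> R) r, \prod_(m | m != k r) F (p m)
    = (\prod_(a in S) F a) * \prod_(r' | r' != r) F (p (k r')).
  move=> F r.
  transitivity (\prod_(a in I0 | a != p (k r)) F a).
    by rewrite /I0 /pivot_set big_img_neq //; apply: eq_bigl => m; rewrite inE.
  rewrite I0eq big_setU_disj //; congr (_ * _).
    apply: eq_bigl => a; case aS: (a \in S) => //=; apply/eqP => e.
    by move: aS; rewrite e inE pkK.
  by rewrite /pK big_img_neq //; apply: eq_bigl => r'; rewrite inE.
set V := fun X : {set 'I_M} =>
  \prod_(a in X) \prod_(b in X | (a < b)%N) (kappa b - kappa a).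
have Vabs : forall X, V X = \prod_(a in X) \prod_(b in X | (a < b)%N) f a b.
  move=> X; apply: eq_bigr => a _; apply: eq_bigr => b /andP[_ ab].
  by rewrite /f distrC ger0_norm // subr_ge0 ltW // Hk.
have Vpos : forall X, 0 < V X.
  move=> X; rewrite Vabs; apply: prodr_gt0 => a _; apply: prodr_gt0 => b /andP[_ ab].
  by apply: fpos; rewrite -(inj_eq val_inj) /= ltn_eqF.
have Vsq : forall X, V X ^+ 2 = Dp f X.
  move=> X; rewrite Vabs; exact: (sq_pairs _ _ f (fun a => a \in X) fS).
have EsetE : forall X, E_set kappa x y t X
    = V X * \prod_(a in X) expR (xi kappa x y t a).
  by move=> X; rewrite /E_set expR_sum.
set ex := fun a => expR (xi kappa x y t a).
have exJ : \prod_(a in J) ex a = (\prod_(a in S) ex a) * \prod_r ex (j r).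
  by rewrite /J big_setU_disj0 // big_imset //= => u v _ _; apply: jinj.
have exI0 : \prod_(a in I0) ex a = (\prod_(a in S) ex a) * \prod_r ex (p (k r)).
  rewrite I0eq big_setU_disj0 // big_imset //= => u v _ _; apply: pkinj.
have pI0 : forall m, p m \in I0 by move=> m; apply/imsetP; exists m.
set Num := fun r => \prod_(m | m != k r) f (p m) (j r).
set Den := fun r => \prod_(m | m != k r) f (p m) (p (k r)).
have e0E : forall r, exp_phi0 kappa A p (k r) (j r) = `|A (k r) (j r)| * (Num r / Den r).
  by move=> r; rewrite /exp_phi0 mulrA.
have Numpos : forall r, 0 < Num r.
  move=> r; apply: prodr_gt0 => m _; apply: fpos; apply/eqP => e.
  by have := jnp r; rewrite -e pI0.
have Denpos : forall r, 0 < Den r.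
  by move=> r; apply: prodr_gt0 => m mk; apply: fpos; rewrite (inj_eq pinj).
have e0pos : forall r, 0 < exp_phi0 kappa A p (k r) (j r).
  move=> r; rewrite e0E; apply: mulr_gt0; first by rewrite normr_gt0.
  by apply: divr_gt0.
have tphiE : forall r, expR (tphi kappa x y t A p (k r) (j r))
    = ex (j r) / ex (p (k r)) * (`|A (k r) (j r)| * (Num r / Den r)).
  by move=> r; rewrite /tphi expRD lnK ?posrE ?e0pos // /phi expRB e0E.
set Cabs := `|\prod_(r < n) \prod_(r' < n | (r < r')%N) C r r'|.
have key : V J = V I0 * Cabs * ((\prod_r Num r) / \prod_r Den r).
  have CS : forall r r', `|C r r'| = `|C r' r|.
    by move=> r r'; rewrite /C; congr (`|_ / _|); ring.
  set Z := \prod_r \prod_(r' | r' != r) f (p (k r)) (j r').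
  set dK := \prod_r \prod_(r' | r' != r) f (p (k r)) (p (k r')).
  set dJ := \prod_r \prod_(r' | r' != r) f (j r) (j r').
  set cK := \prod_(a in S) \prod_r f a (p (k r)).
  set cJ := \prod_(a in S) \prod_r f a (j r).
  have Cabs2 : Cabs ^+ 2 = dK * dJ / (Z * Z).
    rewrite /Cabs normr_prod; under eq_bigr do rewrite normr_prod.
    rewrite sq_pairsT //.
    rewrite (eq_bigr (fun r => \prod_(r' | r' != r)
       (f (p (k r)) (p (k r')) * f (j r) (j r') / (f (p (k r)) (j r') * f (j r) (p (k r')))))); last first.
      by move=> r _; apply: eq_bigr => r' _; rewrite /C normf_div !normrM.
    rewrite prod2_div4; congr (_ / (_ * _)).
    rewrite /Z (pair_swapT _ _ (fun r r' => f (p (k r)) (j r'))).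
    by apply: eq_bigr => r _; apply: eq_bigr => r' _; rewrite fS.
  have NumE : \prod_r Num r = cJ * Z.
    rewrite /Num (eq_bigr (fun r => (\prod_(a in S) f a (j r)) * \prod_(r' | r' != r) f (p (k r')) (j r))); last first.
      by move=> r _; rewrite -(Ypart (fun a => f a (j r))).
    rewrite big_split /= /cJ /Z; congr (_ * _); first by rewrite exchange_big.
    by rewrite (pair_swapT _ _ (fun r r' => f (p (k r)) (j r'))).
  have DenE : \prod_r Den r = cK * dK.
    rewrite /Den (eq_bigr (fun r => (\prod_(a in S) f a (p (k r))) * \prod_(r' | r' != r) f (p (k r')) (p (k r)))); last first.
      by move=> r _; rewrite -(Ypart (fun a => f a (p (k r)))).
    rewrite big_split /= /cK /dK; congr (_ * _); first by rewrite exchange_big.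
    by apply: eq_bigr => r _; apply: eq_bigr => r' _; rewrite fS.
  have cKpos : 0 < cK.
    apply: prodr_gt0 => a aS; apply: prodr_gt0 => r _; apply: fpos; apply/eqP => e.
    by move: aS; rewrite e inE pkK.
  have dKpos : 0 < dK.
    apply: prodr_gt0 => r _; apply: prodr_gt0 => r' rr; apply: fpos.
    by rewrite (inj_eq pkinj) eq_sym.
  have Zpos : 0 < Z.
    apply: prodr_gt0 => r _; apply: prodr_gt0 => r' _; apply: fpos; apply/eqP => e.
    by have := jnp r'; rewrite -e pkI0.
  apply/eqP; rewrite -(@eqrXn2 _ 2%N) //; last first.
  - apply: mulr_ge0; first by apply: mulr_ge0; [exact: ltW | exact: normr_ge0].
    by apply: divr_ge0; apply: prodr_ge0 => r _; apply: ltW.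
  - exact: ltW.
  apply/eqP; rewrite exprMn expr_div_n exprMn !Vsq Cabs2 NumE DenE.
  have JE : J = S :|: jS by [].
  rewrite JE (D_union _ _ f _ _ fS dSjS) I0eq (D_union _ _ f _ _ fS dSpK).
  rewrite /jS (D_img _ _ _ f j jinj) /pK (D_img _ _ _ f (fun r => p (k r)) pkinj) -/dJ -/dK.
  have cJE : \prod_(a in S) \prod_(b in [set j r | r : 'I_n]) f a b = cJ.
    by apply: eq_bigr => a _; rewrite big_imset //= => u v _ _; apply: jinj.
  have cKE : \prod_(a in S) \prod_(b in [set p (k r) | r : 'I_n]) f a b = cK.
    by apply: eq_bigr => a _; rewrite big_imset //= => u v _ _; apply: pkinj.
  rewrite cJE cKE.
  field; rewrite ?mulf_neq0 ?lt0r_neq0 //.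
rewrite !EsetE exJ exI0 expR_sum (eq_bigr _ (fun r _ => tphiE r)).
rewrite big_split prodf_div big_split prodf_div /= normr_prod key.
have VI0 := Vpos I0.
have hS : 0 < \prod_(a in S) ex a by apply: prodr_gt0 => a _; exact: expR_gt0.
have hP : 0 < \prod_r ex (p (k r)) by apply: prodr_gt0 => a _; exact: expR_gt0.
have hD : 0 < \prod_r Den r by apply: prodr_gt0 => a _; exact: Denpos.
field; rewrite ?gt_eqF ?lt0r_neq0 // ?mulf_neq0 ?lt0r_neq0 //.
Qed.
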